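(* $\mathsf{C}_{2^\mathbb{N}}\equiv_{sW}\overline{\mathsf{C}_{2^\mathbb{N}}}\equiv_{sW}\mathsf{T}\mathsf{C}_{2^\mathbb{N}}$.
   Context: A problem $f:\subseteq X\rightrightarrows Y$ between represented spaces (sets with surjective partial maps $\delta:\subseteq\mathbb{N}^\mathbb{N}\to X$) is a partial multi-valued map; $F\vdash f$ means $\delta_YF(p)\in f(\delta_X(p))$ whenever $\delta_X(p)\in\mathrm{dom}(f)$; $f\le_{sW}g$ iff there are computable $H,K$ with $HGK\vdash f$ for all $G\vdash g$. $2^\mathbb{N}$ is Cantor space as a computable metric space; $\mathcal A_-(2^\mathbb N)$ is the space of closed subsets represented by $p\mapsto2^\mathbb N\setminus\bigcup_nB_{p(n)}$ for a standard enumeration $(B_n)$ of basic open balls (including the empty ball). $\mathsf C_{2^\mathbb N}:\subseteq\mathcal A_-(2^\mathbb N)\rightrightarrows2^\mathbb N$, $A\mapsto A$, is defined on nonempty $A$. For $p\in\mathbb{N}^\mathbb{N}$, $p-1$ is the concatenation of $p(0)-1,p(1)-1,\dots$ with $0-1$ the empty word; the completion of $(X,\delta_X)$ is $\overline X=X\cup\{\bot\}$ with $\delta_{\overline X}(p)=\delta_X(p-1)$ if $p-1$ is an infinite sequence in $\mathrm{dom}(\delta_X)$ and $\bot$ otherwise. For $f:\subseteq X\rightrightarrows Y$: $\overline f:\overline X\rightrightarrows\overline Y$ equals $f$ on $\mathrm{dom}(f)$ and $\overline Y$ elsewhere; $\mathsf Tf:X\rightrightarrows Y$ equals $f$ on $\mathrm{dom}(f)$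 and $Y$ elsewhere. *)

(* Defs.v *)
From Stdlib Require Import Arith List PArith.
Import ListNotations.

Definition Baire := nat -> nat.

Inductive code : Type :=
| Zero : code
| Succ : code
| Proj : nat -> code
| Comp : code -> list code -> code
| Prim : code -> code -> code
| Mu   : code -> code.

Inductive eval : code -> list nat -> nat -> Prop :=
| eZero xs : eval Zero xs 0
| eSucc x xs : eval Succ (x :: xs) (S x)
| eProj i xs : i < length xs -> eval (Proj i) xs (nth i xs 0)
| eComp f gs xs ys y : evals gs xs ys -> eval f ys y -> eval (Comp f gs) xs y
| ePrim0 f g xs y : eval f xs y -> eval (Prim f g) (0 :: xs) y
| ePrimS f g n xs r y :
    eval (Prim f g) (n :: xs) r -> eval g (n :: r :: xs) y ->
    eval (Prim f g) (S n :: xs) y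
| eMu f xs n :
    eval f (n :: xs) 0 ->
    (forall m, m < n -> exists k, eval f (m :: xs) (S k)) ->
    eval (Mu f) xs n
with evals : list code -> list nat -> list nat -> Prop :=
| esNil xs : evals nil xs nil
| esCons g gs xs y ys : eval g xs y -> evals gs xs ys -> evals (g :: gs) xs (y :: ys).

Definition computable_nat (h : nat -> nat) : Prop :=
  exists c, forall n, eval c [n] (h n).

Definition cpair (a b : nat) : nat := (a + b) * (a + b + 1) / 2 + b.
Fixpoint code_word (w : list nat) : nat :=
  match w with nil => 0 | a :: w' => S (cpair a (code_word w')) end.
Fixpoint prefix (p : Baire) (k : nat) : list nat :=
  match k with 0 => nil | S k' => prefix p k' ++ [p k'] end.

(** Partial function Baire -> Baire computed by a (total computable) "machine"
    h : h <n, p|k> is 0 ("no output yet") or (F(p)(n) + 1). *)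
Definition machine_fun (h : nat -> nat) (p q : Baire) : Prop :=
  forall n, (exists k, h (cpair n (code_word (prefix p k))) = S (q n)) /\
            (forall k, h (cpair n (code_word (prefix p k))) = 0 \/
                       h (cpair n (code_word (prefix p k))) = S (q n)).

Definition computable_pfun (F : Baire -> Baire -> Prop) : Prop :=
  exists h, computable_nat h /\ forall p q, F p q <-> machine_fun h p q.

Definition functional (G : Baire -> Baire -> Prop) : Prop :=
  forall p q1 q2, G p q1 -> G p q2 -> q1 = q2.

Record rep : Type := Rep { carrier : Type; delta : Baire -> carrier -> Prop }.

Definition problem (X Y : rep) := carrier X -> carrier Y -> Prop.
Definition pdom {X Y : rep} (f : problem X Y) (x : carrier X) : Prop :=
  exists y, f x y.

Definition realizes {X Y : rep} (F : Baire -> Baire -> Prop) (f : problem X Y) : Prop :=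
  forall p x, delta X p x -> pdom f x ->
    exists q, F p q /\ exists y, delta Y q y /\ f x y.

Definition compose3 (H G K : Baire -> Baire -> Prop) (p r : Baire) : Prop :=
  exists q s, K p q /\ G q s /\ H s r.

Definition sW_le {X Y X' Y' : rep} (f : problem X Y) (g : problem X' Y') : Prop :=
  exists H K, computable_pfun H /\ computable_pfun K /\
    forall G, functional G -> realizes G g -> realizes (compose3 H G K) f.

Definition sW_equiv {X Y X' Y' : rep} (f : problem X Y) (g : problem X' Y') : Prop :=
  sW_le f g /\ sW_le g f.

Definition cantor_rep : rep :=
  Rep (nat -> bool) (fun p x => forall n, p n = if x n then 1 else 0).

(** enumeration of finite binary words: m ↦ binary expansion of m+1 without
    the leading 1 (a bijection nat -> list bool) *)
Fixpoint pos_bits (q : positive) : list bool :=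
  match q with
  | xH => nil
  | xO q' => pos_bits q' ++ [false]
  | xI q' => pos_bits q' ++ [true]
  end.
Definition word_of_nat (m : nat) : list bool := pos_bits (Pos.of_succ_nat m).

Definition is_prefix_of (w : list bool) (x : nat -> bool) : Prop :=
  forall i, i < length w -> nth i w false = x i.

(** basic open balls of Cantor space: B_0 = empty ball, B_{m+1} = cylinder [word m] *)
Definition in_ball (n : nat) (x : nat -> bool) : Prop :=
  match n with 0 => False | S m => is_prefix_of (word_of_nat m) x end.

Definition closed_rep : rep :=
  Rep ((nat -> bool) -> Prop)
      (fun p A => forall x, A x <-> ~ (exists n, in_ball (p n) x)).

Definition C2N : problem closed_rep cantor_rep := fun A x => A x.

Fixpoint cnt_nz (p : Baire) (k : nat) : nat :=
  match k with
  | 0 => 0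
  | S k' => cnt_nz p k' + (if Nat.eqb (p k') 0 then 0 else 1)
  end.

(** q is p-1 and p-1 is infinite *)
Definition minus1 (p q : Baire) : Prop :=
  forall n, exists k, p k <> 0 /\ cnt_nz p k = n /\ q n = p k - 1.

Definition completion (X : rep) : rep :=
  Rep (option (carrier X))
      (fun p u => match u with
                  | Some x => exists q, minus1 p q /\ delta X q x
                  | None => ~ (exists q x, minus1 p q /\ delta X q x)
                  end).

Definition pbar {X Y : rep} (f : problem X Y) : problem (completion X) (completion Y) :=
  fun u v => match u with
             | Some x => pdom f x -> exists y, v = Some y /\ f x y
             | None => True
             end.

Definition ptot {X Y : rep} (f : problem X Y) : problem X Y :=
  fun x y => pdom f x -> f x y.

(* Main.v *)
Require Import Defs.
From Stdlib Require Import Arith List Lia PArith Classical ClassicalEpsilon FunctionalExtensionality.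
Import ListNotations.

Definition PR (k : nat) (F : list nat -> nat) : Prop :=
  exists c, forall l, length l = k -> eval c l (F l).

Lemma pr_ext k F G : (forall l, length l = k -> F l = G l) -> PR k F -> PR k G.
Proof. intros E [c Hc]; exists c; intros l Hl; rewrite <- E by exact Hl; auto. Qed.

Lemma pr_proj k i : i < k -> PR k (fun l => nth i l 0).
Proof. intros H; exists (Proj i); intros l Hl; constructor; lia. Qed.

Lemma pr_zero k : PR k (fun _ => 0).
Proof. exists Zero; intros; constructor. Qed.

Lemma pr_succ k A : PR k A -> PR k (fun l => S (A l)).
Proof.
  intros [c Hc]; exists (Comp Succ [c]); intros l Hl.
  econstructor. constructor. apply Hc; auto. constructor. constructor.
Qed.

Lemma pr_const k c : PR k (fun _ => c).
Proof. induction c. apply pr_zero. apply (pr_succ k (fun _ => c)); auto. Qed.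

Lemma pr_comp k fs H : Forall (PR k) fs -> PR (length fs) H ->
  PR k (fun l => H (map (fun f => f l) fs)).
Proof.
  intros HF [ch Hh].
  assert (exists cs, forall l, length l = k -> evals cs l (map (fun f => f l) fs)) as [cs Hcs].
  { clear Hh. induction HF as [|f0 fs0 Hf _ IH].
    - exists (@nil code); intros; constructor.
    - destruct Hf as [c Hc]; destruct IH as [cs Hcs].
      exists (c :: cs); intros l Hl; simpl; constructor; auto. }
  exists (Comp ch cs); intros l Hl; econstructor; eauto.
  apply Hh. rewrite length_map; auto.
Qed.

Fixpoint prec (F G : list nat -> nat) (n : nat) (ys : list nat) : nat :=
  match n with 0 => F ys | S n' => G (n' :: prec F G n' ys :: ys) end.

Lemma pr_prim k F G : PR k F -> PR (S (S k)) G ->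
  PR (S k) (fun l => prec F G (hd 0 l) (tl l)).
Proof.
  intros [cf Hf] [cg Hg]; exists (Prim cf cg); intros l Hl.
  destruct l as [|n ys]; simpl in *; [discriminate|].
  injection Hl as Hl. induction n; simpl.
  - constructor; auto.
  - econstructor; eauto. apply Hg. simpl; auto.
Qed.

Definition PR1 (f : nat -> nat) := PR 1 (fun l => f (nth 0 l 0)).
Definition PR2 (f : nat -> nat -> nat) := PR 2 (fun l => f (nth 0 l 0) (nth 1 l 0)).
Definition PR3 (f : nat -> nat -> nat -> nat) :=
  PR 3 (fun l => f (nth 0 l 0) (nth 1 l 0) (nth 2 l 0)).

Lemma pr_op1 f k A : PR1 f -> PR k A -> PR k (fun l => f (A l)).
Proof.
  intros Hf HA. apply (pr_comp k [A]) in Hf; [|repeat constructor; auto].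
  eapply pr_ext; [|exact Hf]. intros; reflexivity.
Qed.

Lemma pr_op2 f k A B : PR2 f -> PR k A -> PR k B -> PR k (fun l => f (A l) (B l)).
Proof.
  intros Hf HA HB. apply (pr_comp k [A; B]) in Hf; [|repeat constructor; auto].
  eapply pr_ext; [|exact Hf]. intros; reflexivity.
Qed.

Lemma pr_op3 f k A B C : PR3 f -> PR k A -> PR k B -> PR k C ->
  PR k (fun l => f (A l) (B l) (C l)).
Proof.
  intros Hf HA HB HC. apply (pr_comp k [A; B; C]) in Hf; [|repeat constructor; auto].
  eapply pr_ext; [|exact Hf]. intros; reflexivity.
Qed.

Lemma len1 (l : list nat) : length l = 1 -> l = [nth 0 l 0].
Proof. destruct l as [|a [|b l]]; simpl; intros; try discriminate; auto. Qed.
Lemma len2 (l : list nat) : length l = 2 -> l = [nth 0 l 0; nth 1 l 0].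
Proof. destruct l as [|a [|b [|c l]]]; simpl; intros; try discriminate; auto. Qed.
Lemma len3 (l : list nat) : length l = 3 -> l = [nth 0 l 0; nth 1 l 0; nth 2 l 0].
Proof. destruct l as [|a [|b [|c [|d l]]]]; simpl; intros; try discriminate; auto. Qed.

Lemma pr_add : PR2 Nat.add.
Proof.
  set (F := fun l : list nat => nth 0 l 0).
  set (G := fun l : list nat => S (nth 1 l 0)).
  assert (HP : PR 2 (fun l => prec F G (hd 0 l) (tl l))).
  { apply pr_prim. apply pr_proj; lia. apply pr_succ, pr_proj; lia. }
  eapply pr_ext; [|exact HP]. intros l Hl. rewrite (len2 l Hl). simpl.
  generalize (nth 0 l 0) (nth 1 l 0); intros a b. induction a; simpl in *; auto.
  unfold G in *; simpl in *; lia.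
Qed.

Lemma pr_mul : PR2 Nat.mul.
Proof.
  set (F := fun l : list nat => 0).
  set (G := fun l : list nat => nth 1 l 0 + nth 2 l 0).
  assert (HP : PR 2 (fun l => prec F G (hd 0 l) (tl l))).
  { apply pr_prim. apply pr_zero. apply pr_op2. apply pr_add. apply pr_proj; lia. apply pr_proj; lia. }
  eapply pr_ext; [|exact HP]. intros l Hl. rewrite (len2 l Hl). simpl.
  generalize (nth 0 l 0) (nth 1 l 0); intros a b. induction a; simpl; auto.
  unfold G in *; simpl in *. lia.
Qed.

Lemma pr_pred : PR1 Nat.pred.
Proof.
  set (F := fun l : list nat => 0).
  set (G := fun l : list nat => nth 0 l 0).
  assert (HP : PR 1 (fun l => prec F G (hd 0 l) (tl l))).
  { apply pr_prim. apply pr_zero. apply pr_proj; lia. }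
  eapply pr_ext; [|exact HP]. intros l Hl. rewrite (len1 l Hl). simpl.
  destruct (nth 0 l 0); reflexivity.
Qed.

Lemma pr_sub : PR2 Nat.sub.
Proof.
  set (F := fun l : list nat => nth 0 l 0).
  set (G := fun l : list nat => Nat.pred (nth 1 l 0)).
  assert (HP : PR 2 (fun l => prec F G (hd 0 l) (tl l))).
  { apply pr_prim. apply pr_proj; lia. apply pr_op1. apply pr_pred. apply pr_proj; lia. }
  assert (HQ : PR 2 (fun l => prec F G (nth 1 l 0) [nth 0 l 0])).
  { apply (pr_op2 (fun a b => prec F G a [b])); [|apply pr_proj; lia|apply pr_proj; lia].
    eapply pr_ext; [|exact HP]. intros l Hl. rewrite (len2 l Hl). reflexivity. }
  eapply pr_ext; [|exact HQ]. intros l Hl. simpl.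
  generalize (nth 0 l 0) (nth 1 l 0); intros a b. unfold F, G in *. induction b; simpl in *. lia.
  unfold G in *; simpl in *. lia.
Qed.

Lemma pr_ifz : PR3 (fun z x y => if z =? 0 then x else y).
Proof.
  set (F := fun l : list nat => nth 0 l 0).
  set (G := fun l : list nat => nth 3 l 0).
  assert (HP : PR 3 (fun l => prec F G (hd 0 l) (tl l))).
  { apply pr_prim. apply pr_proj; lia. apply pr_proj; lia. }
  eapply pr_ext; [|exact HP]. intros l Hl. rewrite (len3 l Hl). simpl.
  destruct (nth 0 l 0); reflexivity.
Qed.

Lemma pr_plus k A B : PR k A -> PR k B -> PR k (fun l => A l + B l).
Proof. apply pr_op2, pr_add. Qed.
Lemma pr_times k A B : PR k A -> PR k B -> PR k (fun l => A l * B l).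
Proof. apply pr_op2, pr_mul. Qed.
Lemma pr_minus k A B : PR k A -> PR k B -> PR k (fun l => A l - B l).
Proof. apply pr_op2, pr_sub. Qed.
Lemma pr_if0 k Z X Y : PR k Z -> PR k X -> PR k Y ->
  PR k (fun l => if Z l =? 0 then X l else Y l).
Proof. intros; apply (pr_op3 (fun z x y => if z =? 0 then x else y)); auto; apply pr_ifz. Qed.

Lemma pr_ifeq k A B X Y : PR k A -> PR k B -> PR k X -> PR k Y ->
  PR k (fun l => if A l =? B l then X l else Y l).
Proof.
  intros. eapply pr_ext; [|apply (pr_if0 k (fun l => (A l - B l) + (B l - A l)) X Y)];
  [| apply pr_plus; apply pr_minus; auto | auto | auto].
  intros l _. simpl. destruct (Nat.eqb_spec (A l - B l + (B l - A l)) 0), (Nat.eqb_spec (A l) (B l)); auto; lia.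
Qed.

Lemma pr_ifle k A B X Y : PR k A -> PR k B -> PR k X -> PR k Y ->
  PR k (fun l => if A l <=? B l then X l else Y l).
Proof.
  intros. eapply pr_ext; [|apply (pr_if0 k (fun l => (A l - B l)) X Y)];
  [| apply pr_minus; auto | auto | auto].
  intros l _. simpl. destruct (Nat.eqb_spec (A l - B l) 0), (Nat.leb_spec (A l) (B l)); auto; lia.
Qed.

Lemma pr_iflt k A B X Y : PR k A -> PR k B -> PR k X -> PR k Y ->
  PR k (fun l => if A l <? B l then X l else Y l).
Proof.
  intros. eapply pr_ext; [|apply (pr_if0 k (fun l => (B l - A l)) Y X)];
  [| apply pr_minus; auto | auto | auto].
  intros l _. simpl. destruct (Nat.eqb_spec (B l - A l) 0), (Nat.ltb_spec (A l) (B l)); auto; lia.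
Qed.

Fixpoint bsum (f : nat -> nat) (n : nat) : nat :=
  match n with 0 => 0 | S n' => bsum f n' + f n' end.

Lemma map_nth_seq_skip (l : list nat) k s :
  length l = s + k -> map (fun i => nth i l 0) (seq s k) = skipn s l.
Proof.
  revert l s; induction k; intros l s Hl; simpl.
  - rewrite skipn_all2; auto; lia.
  - rewrite IHk by lia.
    assert (Hs : s < length l) by lia.
    revert Hs. clear. revert l; induction s; intros l Hs; destruct l; simpl in *; try lia.
    reflexivity. apply IHs; lia.
Qed.

Lemma pr_bsum k B F : PR k B -> PR (S k) F ->
  PR k (fun l => bsum (fun i => F (i :: l)) (B l)).
Proof.
  intros HB HF.
  set (G := fun l : list nat => nth 1 l 0 + F (nth 0 l 0 :: skipn 2 l)).
  assert (HG : PR (S (S k)) G).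
  { apply pr_plus. apply pr_proj; lia.
    set (fs := (fun l : list nat => nth 0 l 0) :: map (fun i (l : list nat) => nth i l 0) (seq 2 k)).
    assert (Hc := pr_comp (S (S k)) fs F).
    eapply pr_ext; [|apply Hc].
    - intros l Hl. cbv beta. unfold fs. cbn [map].
      rewrite map_map, (map_nth_seq_skip l k 2) by lia. reflexivity.
    - unfold fs. constructor. apply pr_proj; lia.
      apply Forall_forall. intros f Hf. apply in_map_iff in Hf as [i [<- Hi]].
      apply in_seq in Hi. apply pr_proj; lia.
    - unfold fs; simpl. rewrite length_map, length_seq. auto. }
  assert (HP := pr_prim k (fun _ => 0) G (pr_zero k) HG).
  set (fs := B :: map (fun i (l : list nat) => nth i l 0) (seq 0 k)).
  pose proof (pr_comp k fs (fun l => prec (fun _ => 0) G (hd 0 l) (tl l))) as Hc.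
  eapply pr_ext; [|apply Hc].
  - intros l Hl. cbv beta. unfold fs. cbn [map]. rewrite map_map, (map_nth_seq_skip l k 0) by lia.
    rewrite skipn_O. cbn [hd tl].
    generalize (B l); intros n. induction n; simpl; auto. rewrite IHn. reflexivity.
  - unfold fs. constructor; auto.
    apply Forall_forall. intros f Hf. apply in_map_iff in Hf as [i [<- Hi]].
    apply in_seq in Hi. apply pr_proj; lia.
  - unfold fs; simpl. rewrite length_map, length_seq. exact HP.
Qed.
Ltac prt_hook := fail.
Ltac prt := repeat first
  [ assumption | apply pr_proj; simpl; lia | prt_hook
  | apply pr_const
  | apply pr_plus | apply pr_times | apply pr_minus
  | apply pr_ifeq | apply pr_ifle | apply pr_iflt | apply pr_succ ].

Fixpoint tri z := match z with 0 => 0 | S z' => tri z' + S z' end.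

Lemma pr_tri1 : PR1 tri.
Proof.
  set (G := fun l : list nat => nth 1 l 0 + S (nth 0 l 0)).
  assert (HP : PR 1 (fun l => prec (fun _ => 0) G (hd 0 l) (tl l))).
  { apply pr_prim. apply pr_zero. unfold G; prt. }
  eapply pr_ext; [|exact HP]. intros l Hl. rewrite (len1 l Hl). simpl.
  generalize (nth 0 l 0); intros a. unfold G. induction a; simpl in *; auto.
Qed.
Lemma pr_tri k A : PR k A -> PR k (fun l => tri (A l)).
Proof. apply pr_op1, pr_tri1. Qed.

Lemma pr_pow1 : PR1 (fun n => 2 ^ n).
Proof.
  set (G := fun l : list nat => nth 1 l 0 + nth 1 l 0).
  assert (HP : PR 1 (fun l => prec (fun _ => 1) G (hd 0 l) (tl l))).
  { apply pr_prim. apply pr_const. unfold G; prt. }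
  eapply pr_ext; [|exact HP]. intros l Hl. rewrite (len1 l Hl). simpl.
  generalize (nth 0 l 0); intros a. unfold G. induction a; simpl in *; auto.
  rewrite IHa. lia.
Qed.
Lemma pr_pow k A : PR k A -> PR k (fun l => 2 ^ (A l)).
Proof. apply (pr_op1 (fun n => 2 ^ n)), pr_pow1. Qed.

Ltac prt_hook ::= first [apply pr_tri | apply pr_pow].

Lemma bsum_ext f g n : (forall i, i < n -> f i = g i) -> bsum f n = bsum g n.
Proof. induction n; simpl; intros; auto. rewrite IHn, H; auto. Qed.

Lemma bsum_ind_lt s m : bsum (fun i => if i <? s then 1 else 0) m = Nat.min s m.
Proof.
  induction m; simpl. lia. rewrite IHm. destruct (Nat.ltb_spec m s); lia.
Qed.

Definition shr t d := bsum (fun q => if S q * 2 ^ d <=? t then 1 else 0) t.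

Lemma shr_div t d : shr t d = t / 2 ^ d.
Proof.
  unfold shr. assert (Hp : 2 ^ d <> 0) by (apply Nat.pow_nonzero; lia).
  rewrite (bsum_ext _ (fun i => if i <? t / 2 ^ d then 1 else 0)).
  - rewrite bsum_ind_lt. assert (t / 2 ^ d <= t) by (apply Nat.div_le_upper_bound; nia). lia.
  - intros i _. destruct (Nat.leb_spec (S i * 2 ^ d) t), (Nat.ltb_spec i (t / 2 ^ d)); auto.
    + exfalso. assert (S i <= t / 2 ^ d) by (apply Nat.div_le_lower_bound; nia). lia.
    + exfalso. assert (2 ^ d * (t / 2 ^ d) <= t) by (apply Nat.mul_div_le; auto). nia.
Qed.

Lemma pr_shr2 : PR2 shr.
Proof.
  unfold PR2, shr.
  apply (pr_bsum 2 (fun l => nth 0 l 0)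
    (fun l => if S (nth 0 l 0) * 2 ^ (nth 2 l 0) <=? nth 1 l 0 then 1 else 0)).
  all: prt.
Qed.
Lemma pr_shr k A B : PR k A -> PR k B -> PR k (fun l => shr (A l) (B l)).
Proof. apply pr_op2, pr_shr2. Qed.

Definition psz m := bsum (fun i => if tri (S i) <=? m then 1 else 0) m.
Definition psnd m := m - tri (psz m).
Definition pfst m := psz m - psnd m.

Lemma pr_psz1 : PR1 psz.
Proof.
  unfold PR1, psz.
  apply (pr_bsum 1 (fun l => nth 0 l 0)
    (fun l => if tri (S (nth 0 l 0)) <=? nth 1 l 0 then 1 else 0)).
  all: prt.
Qed.
Lemma pr_psz k A : PR k A -> PR k (fun l => psz (A l)).
Proof. apply pr_op1, pr_psz1. Qed.
Ltac prt_hook ::= first [apply pr_tri | apply pr_pow | apply pr_shr | apply pr_psz].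
Lemma pr_psnd k A : PR k A -> PR k (fun l => psnd (A l)).
Proof. intros. unfold psnd. prt. Qed.
Ltac prt_hook ::= first [apply pr_tri | apply pr_pow | apply pr_shr | apply pr_psz | apply pr_psnd].
Lemma pr_pfst k A : PR k A -> PR k (fun l => pfst (A l)).
Proof. intros. unfold pfst. prt. Qed.

Ltac prt_hook ::= first [apply pr_tri | apply pr_pow | apply pr_shr | apply pr_psz | apply pr_psnd | apply pr_pfst].

Lemma tri2 s : 2 * tri s = s * (s + 1).
Proof. induction s; simpl in *; lia. Qed.

Lemma cpair_tri a b : cpair a b = tri (a + b) + b.
Proof.
  unfold cpair. f_equal. rewrite <- tri2. rewrite Nat.mul_comm. apply Nat.div_mul. lia.
Qed.

Lemma tri_mono a b : a <= b -> tri a <= tri b.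
Proof. induction 1; simpl; lia. Qed.
Lemma tri_ge s : s <= tri s.
Proof. induction s; simpl; lia. Qed.

Lemma psz_cpair a b : psz (cpair a b) = a + b.
Proof.
  rewrite cpair_tri. unfold psz. set (s := a + b).
  rewrite (bsum_ext _ (fun i => if i <? s then 1 else 0)).
  - rewrite bsum_ind_lt. pose proof (tri_ge s). lia.
  - intros i _. destruct (Nat.leb_spec (tri (S i)) (tri s + b)), (Nat.ltb_spec i s); auto.
    + exfalso. assert (tri (S s) <= tri (S i)) by (apply tri_mono; lia). simpl in *. lia.
    + exfalso. assert (tri (S i) <= tri s) by (apply tri_mono; lia). lia.
Qed.

Lemma psnd_cpair a b : psnd (cpair a b) = b.
Proof. unfold psnd. rewrite psz_cpair, cpair_tri. lia. Qed.
Lemma pfst_cpair a b : pfst (cpair a b) = a.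
Proof. unfold pfst. rewrite psz_cpair, psnd_cpair. lia. Qed.

Lemma psz0 : psz 0 = 0. Proof. reflexivity. Qed.

Definition wtl w := psnd (w - 1).
Definition whd w := pfst (w - 1).
Fixpoint witer i w := match i with 0 => w | S i' => wtl (witer i' w) end.
Definition wnth i w := whd (witer i w).
Definition wlen w := bsum (fun i => if witer i w =? 0 then 0 else 1) w.

Lemma pr_witer2 : PR2 witer.
Proof.
  set (G := fun l : list nat => wtl (nth 1 l 0)).
  assert (HP : PR 2 (fun l => prec (fun l => nth 0 l 0) G (hd 0 l) (tl l))).
  { apply pr_prim. prt. unfold G, wtl. prt. }
  eapply pr_ext; [|exact HP]. intros l Hl. rewrite (len2 l Hl). simpl.
  generalize (nth 0 l 0) (nth 1 l 0); intros a b. unfold G. induction a; simpl in *; auto; congruence.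
Qed.
Lemma pr_witer k A B : PR k A -> PR k B -> PR k (fun l => witer (A l) (B l)).
Proof. apply pr_op2, pr_witer2. Qed.
Ltac prt_hook ::= first [apply pr_tri | apply pr_pow | apply pr_shr | apply pr_psz | apply pr_psnd | apply pr_pfst | apply pr_witer].
Lemma pr_wnth k A B : PR k A -> PR k B -> PR k (fun l => wnth (A l) (B l)).
Proof. intros. unfold wnth, whd. prt. Qed.
Lemma pr_wlen1 : PR1 wlen.
Proof.
  unfold PR1, wlen.
  apply (pr_bsum 1 (fun l => nth 0 l 0)
    (fun l => if witer (nth 0 l 0) (nth 1 l 0) =? 0 then 0 else 1)).
  all: prt.
Qed.
Lemma pr_wlen k A : PR k A -> PR k (fun l => wlen (A l)).
Proof. apply pr_op1, pr_wlen1. Qed.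

Ltac prt_hook ::= first [apply pr_tri | apply pr_pow | apply pr_shr | apply pr_psz | apply pr_psnd | apply pr_pfst | apply pr_witer | apply pr_wnth | apply pr_wlen].

Lemma wtl_code l : wtl (code_word l) = code_word (tl l).
Proof. destruct l; simpl. reflexivity. unfold wtl. simpl. rewrite ?Nat.sub_0_r, psnd_cpair. auto. Qed.
Lemma whd_code l : whd (code_word l) = hd 0 l.
Proof. destruct l; simpl. reflexivity. unfold whd. simpl. rewrite ?Nat.sub_0_r, pfst_cpair. auto. Qed.

Lemma skipn_S_tl {A} i (l : list A) : skipn (S i) l = tl (skipn i l).
Proof. revert l; induction i; intros [|a l]; try reflexivity. exact (IHi l). Qed.

Lemma witer_code i l : witer i (code_word l) = code_word (skipn i l).
Proof. induction i; [reflexivity|]. cbn [witer]. rewrite IHi, wtl_code, skipn_S_tl. auto. Qed.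

Lemma nth_hd_skipn i (l : list nat) : nth i l 0 = hd 0 (skipn i l).
Proof. revert l; induction i; intros [|a l]; simpl; auto. Qed.

Lemma wnth_code i l : wnth i (code_word l) = nth i l 0.
Proof. unfold wnth. rewrite witer_code, whd_code, nth_hd_skipn. auto. Qed.

Lemma code_word_ge l : length l <= code_word l.
Proof. induction l; simpl; auto. rewrite cpair_tri. pose proof (tri_ge (a + code_word l)). lia. Qed.

Lemma wlen_code l : wlen (code_word l) = length l.
Proof.
  unfold wlen. rewrite (bsum_ext _ (fun i => if i <? length l then 1 else 0)).
  - rewrite bsum_ind_lt. pose proof (code_word_ge l). lia.
  - intros i _. rewrite witer_code.
    destruct (Nat.ltb_spec i (length l)).
    + destruct (skipn i l) eqn:E. exfalso. assert (length (skipn i l) = 0) by (rewrite E; auto).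
      rewrite length_skipn in H0. lia. simpl. auto.
    + rewrite skipn_all2 by lia. auto.
Qed.
Lemma pr_op4 f k A B C D : PR 4 (fun l => f (nth 0 l 0) (nth 1 l 0) (nth 2 l 0) (nth 3 l 0)) ->
  PR k A -> PR k B -> PR k C -> PR k D ->
  PR k (fun l => f (A l) (B l) (C l) (D l)).
Proof.
  intros Hf HA HB HC HD. apply (pr_comp k [A; B; C; D]) in Hf; [|repeat constructor; auto].
  eapply pr_ext; [|exact Hf]. intros; reflexivity.
Qed.

Definition cntw w i := bsum (fun j => if wnth j w =? 0 then 0 else 1) i.
Lemma pr_cntw k A B : PR k A -> PR k B -> PR k (fun l => cntw (A l) (B l)).
Proof.
  intros HA HB. apply (pr_op2 cntw); auto. unfold PR2, cntw.
  apply (pr_bsum 2 (fun l => nth 1 l 0)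
    (fun l => if wnth (nth 0 l 0) (nth 1 l 0) =? 0 then 0 else 1)); prt.
Qed.

Definition hplus m := if pfst m <? wlen (psnd m) then S (S (wnth (pfst m) (psnd m))) else 0.
Definition hminus m := bsum (fun i => if wnth i (psnd m) =? 0 then 0
   else if cntw (psnd m) i =? pfst m then S (wnth i (psnd m) - 1) else 0) (wlen (psnd m)).

Lemma pr_hplus : PR1 hplus.
Proof. unfold PR1, hplus. prt. Qed.

Ltac prt_hook ::= first [apply pr_tri | apply pr_pow | apply pr_shr | apply pr_psz | apply pr_psnd | apply pr_pfst | apply pr_witer | apply pr_wnth | apply pr_wlen | apply pr_cntw].

Lemma pr_hminus : PR1 hminus.
Proof.
  unfold PR1, hminus.
  apply (pr_bsum 1 (fun l => wlen (psnd (nth 0 l 0)))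
    (fun l => if wnth (nth 0 l 0) (psnd (nth 1 l 0)) =? 0 then 0
   else if cntw (psnd (nth 1 l 0)) (nth 0 l 0) =? pfst (nth 1 l 0)
        then S (wnth (nth 0 l 0) (psnd (nth 1 l 0)) - 1) else 0)); prt.
Qed.

Definition hitb (b : nat -> nat) n t :=
  bsum (fun i => bsum (fun d => if b i =? 0 then 0 else if shr t d =? b i then 1 else 0) t) (S n).
Definition Db (b : nat -> nat) n := bsum b (S n).
Definition uncovb (b : nat -> nat) n :=
  bsum (fun j => if hitb b n (2 ^ Db b n + j) =? 0 then 1 else 0) (2 ^ Db b n).
Definition tr (b : nat -> nat) i := if uncovb b i =? 0 then 0 else b i.

Definition wb sh w i := wnth i w - sh.

Lemma pr_hitw k S W N T : PR k S -> PR k W -> PR k N -> PR k T ->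
  PR k (fun l => hitb (wb (S l) (W l)) (N l) (T l)).
Proof.
  intros. apply (pr_op4 (fun s w n t => hitb (wb s w) n t)); auto.
  eapply pr_ext; [| apply (pr_bsum 4 (fun l => Datatypes.S (nth 2 l 0))
      (fun l => bsum (fun d => (fun l' =>
         if wnth (nth 1 l' 0) (nth 3 l' 0) - nth 2 l' 0 =? 0 then 0
         else if shr (nth 5 l' 0) (nth 0 l' 0) =? wnth (nth 1 l' 0) (nth 3 l' 0) - nth 2 l' 0
              then 1 else 0) (d :: l)) (nth 4 l 0)))].
  - intros l _. reflexivity.
  - prt.
  - apply (pr_bsum 5 (fun l => nth 4 l 0) (fun l' =>
         if wnth (nth 1 l' 0) (nth 3 l' 0) - nth 2 l' 0 =? 0 then 0
         else if shr (nth 5 l' 0) (nth 0 l' 0) =? wnth (nth 1 l' 0) (nth 3 l' 0) - nth 2 l' 0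
              then 1 else 0)); prt.
Qed.

Lemma pr_Dw k S W N : PR k S -> PR k W -> PR k N ->
  PR k (fun l => Db (wb (S l) (W l)) (N l)).
Proof.
  intros. apply (pr_op3 (fun s w n => Db (wb s w) n)); auto.
  eapply pr_ext; [| apply (pr_bsum 3 (fun l => Datatypes.S (nth 2 l 0))
      (fun l => wnth (nth 0 l 0) (nth 2 l 0) - nth 1 l 0))].
  - intros l _. reflexivity.
  - prt.
  - prt.
Qed.

Ltac prt_hook ::= first [apply pr_tri | apply pr_pow | apply pr_shr | apply pr_psz | apply pr_psnd | apply pr_pfst | apply pr_witer | apply pr_wnth | apply pr_wlen | apply pr_cntw | apply pr_hitw | apply pr_Dw].

Lemma pr_uncw k S W N : PR k S -> PR k W -> PR k N ->
  PR k (fun l => uncovb (wb (S l) (W l)) (N l)).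
Proof.
  intros. apply (pr_op3 (fun s w n => uncovb (wb s w) n)); auto.
  eapply pr_ext; [| apply (pr_bsum 3 (fun l => 2 ^ Db (wb (nth 0 l 0) (nth 1 l 0)) (nth 2 l 0))
      (fun l => if hitb (wb (nth 1 l 0) (nth 2 l 0)) (nth 3 l 0)
                   (2 ^ Db (wb (nth 1 l 0) (nth 2 l 0)) (nth 3 l 0) + nth 0 l 0) =? 0 then 1 else 0))].
  - intros l _. reflexivity.
  - prt.
  - prt.
Qed.

Ltac prt_hook ::= first [apply pr_tri | apply pr_pow | apply pr_shr | apply pr_psz | apply pr_psnd | apply pr_pfst | apply pr_witer | apply pr_wnth | apply pr_wlen | apply pr_cntw | apply pr_hitw | apply pr_Dw | apply pr_uncw].

Definition htrick sh e m :=
  if pfst m <? wlen (psnd m) then S (e + tr (wb sh (psnd m)) (pfst m)) else 0.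

Lemma pr_htrick sh e : PR1 (htrick sh e).
Proof.
  unfold PR1, htrick, tr.
  apply pr_iflt; prt; unfold wb; prt.
Qed.

Lemma PR1_computable h : PR1 h -> computable_nat h.
Proof. intros [c Hc]. exists c. intros n. apply (Hc [n]). reflexivity. Qed.
Lemma prefix_len p k : length (prefix p k) = k.
Proof. induction k; simpl; auto. rewrite length_app, IHk. simpl. lia. Qed.

Lemma prefix_nth p k i : i < k -> nth i (prefix p k) 0 = p i.
Proof.
  induction k; intros H; [lia|]. simpl.
  destruct (Nat.eq_dec i k).
  - subst. rewrite app_nth2; rewrite prefix_len; auto. rewrite Nat.sub_diag. auto.
  - rewrite app_nth1 by (rewrite prefix_len; lia). apply IHk; lia.
Qed.

Lemma mach_thresh h p q :
  (forall n, exists k0, forall k, h (cpair n (code_word (prefix p k))) = if k0 <=? k then S (q n) else 0) ->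
  machine_fun h p q.
Proof.
  intros H n. destruct (H n) as [k0 Hk]. split.
  - exists k0. rewrite Hk, Nat.leb_refl. auto.
  - intros k. rewrite Hk. destruct (k0 <=? k); auto.
Qed.

Lemma hplus_ok p : machine_fun hplus p (fun n => S (p n)).
Proof.
  apply mach_thresh. intros n. exists (S n). intros k.
  unfold hplus. rewrite pfst_cpair, psnd_cpair, wlen_code, prefix_len.
  destruct (Nat.ltb_spec n k), (Nat.leb_spec (S n) k); try lia; auto.
  rewrite wnth_code, prefix_nth; auto.
Qed.

Lemma cnt_bsum p i : cnt_nz p i = bsum (fun j => if p j =? 0 then 0 else 1) i.
Proof. induction i; simpl; auto. Qed.

Lemma cnt_mono p i j : i <= j -> cnt_nz p i <= cnt_nz p j.
Proof. induction 1; simpl; lia. Qed.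

Lemma cnt_inj p i j : p i <> 0 -> p j <> 0 -> cnt_nz p i = cnt_nz p j -> i = j.
Proof.
  intros Hi Hj E. destruct (Nat.lt_trichotomy i j) as [H|[H|H]]; auto; exfalso.
  - assert (cnt_nz p (S i) <= cnt_nz p j) by (apply cnt_mono; lia).
    simpl in H0. destruct (Nat.eqb_spec (p i) 0); [contradiction|]. lia.
  - assert (cnt_nz p (S j) <= cnt_nz p i) by (apply cnt_mono; lia).
    simpl in H0. destruct (Nat.eqb_spec (p j) 0); [contradiction|]. lia.
Qed.

Lemma bsum_single f k0 k : (forall i, i <> k0 -> f i = 0) ->
  bsum f k = if k0 <? k then f k0 else 0.
Proof.
  intros H. induction k; simpl; auto. rewrite IHk.
  destruct (Nat.ltb_spec k0 k), (Nat.ltb_spec k0 (S k)); try lia.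
  - rewrite (H k) by lia. lia.
  - assert (k0 = k) by lia. subst. auto.
  - rewrite (H k) by lia. auto.
Qed.

Lemma hminus_ok p q : minus1 p q -> machine_fun hminus p q.
Proof.
  intros Hm. apply mach_thresh. intros n. destruct (Hm n) as [kn [Hnz [Hc Hq]]].
  exists (S kn). intros k.
  unfold hminus. rewrite pfst_cpair, psnd_cpair, wlen_code, prefix_len.
  rewrite (bsum_ext _ (fun i => if p i =? 0 then 0 else if cnt_nz p i =? n then S (p i - 1) else 0)).
  - rewrite (bsum_single _ kn).
    + destruct (Nat.eqb_spec (p kn) 0); [contradiction|]. rewrite Hc, Nat.eqb_refl.
      destruct (Nat.ltb_spec kn k), (Nat.leb_spec (S kn) k); try lia; congruence.
    + intros i Hi. destruct (Nat.eqb_spec (p i) 0); auto.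
      destruct (Nat.eqb_spec (cnt_nz p i) n); auto.
      exfalso. apply Hi. apply (cnt_inj p); auto. congruence.
  - intros i Hi. rewrite wnth_code, prefix_nth by auto.
    unfold cntw. rewrite cnt_bsum.
    rewrite (bsum_ext (fun j => if wnth j (code_word (prefix p k)) =? 0 then 0 else 1)
                      (fun j => if p j =? 0 then 0 else 1)); auto.
    intros j Hj. rewrite wnth_code, prefix_nth by lia. auto.
Qed.

Lemma hitb_ext b b' n t : (forall i, i <= n -> b i = b' i) -> hitb b n t = hitb b' n t.
Proof.
  intros H. unfold hitb. apply bsum_ext. intros i Hi. rewrite H by lia. auto.
Qed.
Lemma Db_ext b b' n : (forall i, i <= n -> b i = b' i) -> Db b n = Db b' n.
Proof. intros H. unfold Db. apply bsum_ext. intros i Hi. apply H; lia. Qed.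
Lemma uncovb_ext b b' n : (forall i, i <= n -> b i = b' i) -> uncovb b n = uncovb b' n.
Proof.
  intros H. unfold uncovb. rewrite (Db_ext b b') by auto. apply bsum_ext.
  intros j _. rewrite (hitb_ext b b') by auto. auto.
Qed.
Lemma tr_ext b b' n : (forall i, i <= n -> b i = b' i) -> tr b n = tr b' n.
Proof. intros H. unfold tr. rewrite (uncovb_ext b b') by auto. rewrite H; auto. Qed.

Lemma htrick_ok sh e p : machine_fun (htrick sh e) p (fun n => e + tr (fun i => p i - sh) n).
Proof.
  apply mach_thresh. intros n. exists (S n). intros k.
  unfold htrick. rewrite pfst_cpair, psnd_cpair, wlen_code, prefix_len.
  destruct (Nat.ltb_spec n k), (Nat.leb_spec (S n) k); try lia; auto.
  do 2 f_equal. apply tr_ext. intros i Hi. unfold wb. rewrite wnth_code, prefix_nth by lia. auto.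
Qed.
Lemma bsum_zero_iff f n : bsum f n = 0 <-> forall i, i < n -> f i = 0.
Proof.
  induction n; simpl; split; intros H.
  - intros; lia.
  - auto.
  - intros i Hi. assert (bsum f n = 0 /\ f n = 0) as [H1 H2] by lia.
    destruct (Nat.eq_dec i n); [subst; auto|]. apply IHn; auto; lia.
  - rewrite (proj2 IHn) by (intros; apply H; lia). rewrite H; auto.
Qed.

Lemma pos_bits_inj p q : pos_bits p = pos_bits q -> p = q.
Proof.
  revert q; induction p as [p IH|p IH|]; intros [q|q|]; simpl; intros E; auto.
  all: try (apply app_inj_tail in E as [E1 E2]; try discriminate; f_equal; auto; fail).
  all: try (destruct (pos_bits p); discriminate).
  all: destruct (pos_bits q); discriminate.
Qed.

Lemma pos_bits_bound p :
  2 ^ length (pos_bits p) <= Pos.to_nat p < 2 ^ S (length (pos_bits p)).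
Proof.
  induction p as [p IH|p IH|]; simpl.
  - rewrite length_app, Pos2Nat.inj_xI. simpl. rewrite Nat.add_1_r. simpl in *. lia.
  - rewrite length_app, Pos2Nat.inj_xO. simpl. rewrite Nat.add_1_r. simpl in *. lia.
  - simpl. lia.
Qed.

Lemma pow2_pos d : 0 < 2 ^ d.
Proof. apply Nat.neq_0_lt_0, Nat.pow_nonzero; lia. Qed.

Lemma pre_div_r t b s : pos_bits t = pos_bits b ++ s ->
  Pos.to_nat t / 2 ^ length s = Pos.to_nat b.
Proof.
  revert s; induction t as [t IH|t IH|]; intros s E.
  - destruct s as [|c s'] using rev_ind.
    + rewrite app_nil_r in E. apply pos_bits_inj in E. subst.
      change (length (@nil bool)) with 0. rewrite Nat.pow_0_r, Nat.div_1_r. auto.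
    + clear IHs'. simpl in E. rewrite app_assoc in E. apply app_inj_tail in E as [E1 _].
      apply IH in E1. rewrite length_app, Nat.add_comm. cbn [length Nat.add].
      rewrite Nat.pow_succ_r', <- Nat.Div0.div_div, Pos2Nat.inj_xI.
      replace ((S (2 * Pos.to_nat t)) / 2) with (Pos.to_nat t). auto.
      apply Nat.div_unique with 1; lia.
  - destruct s as [|c s'] using rev_ind.
    + rewrite app_nil_r in E. apply pos_bits_inj in E. subst.
      change (length (@nil bool)) with 0. rewrite Nat.pow_0_r, Nat.div_1_r. auto.
    + clear IHs'. simpl in E. rewrite app_assoc in E. apply app_inj_tail in E as [E1 _].
      apply IH in E1. rewrite length_app, Nat.add_comm. cbn [length Nat.add].
      rewrite Nat.pow_succ_r', <- Nat.Div0.div_div, Pos2Nat.inj_xO.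
      replace ((2 * Pos.to_nat t) / 2) with (Pos.to_nat t). auto.
      apply Nat.div_unique with 0; lia.
  - simpl in E. destruct (pos_bits b) eqn:Eb; [|discriminate]. destruct s; [|discriminate].
    replace b with 1%positive. auto. apply pos_bits_inj. simpl. auto.
Qed.
Lemma pre_div_l t b d : Pos.to_nat t / 2 ^ d = Pos.to_nat b ->
  exists s, pos_bits t = pos_bits b ++ s.
Proof.
  revert d; induction t as [t IH|t IH|]; intros d E.
  - destruct d.
    + rewrite Nat.pow_0_r, Nat.div_1_r in E. apply Pos2Nat.inj in E. subst. exists nil.
      rewrite app_nil_r; auto.
    + rewrite Nat.pow_succ_r', <- Nat.Div0.div_div, Pos2Nat.inj_xI in E.
      replace ((S (2 * Pos.to_nat t)) / 2) with (Pos.to_nat t) in E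
        by (apply Nat.div_unique with 1; lia).
      destruct (IH d E) as [s Hs]. exists (s ++ [true]). simpl. rewrite Hs, app_assoc. auto.
  - destruct d.
    + rewrite Nat.pow_0_r, Nat.div_1_r in E. apply Pos2Nat.inj in E. subst. exists nil.
      rewrite app_nil_r; auto.
    + rewrite Nat.pow_succ_r', <- Nat.Div0.div_div, Pos2Nat.inj_xO in E.
      replace ((2 * Pos.to_nat t) / 2) with (Pos.to_nat t) in E
        by (apply Nat.div_unique with 0; lia).
      destruct (IH d E) as [s Hs]. exists (s ++ [false]). simpl. rewrite Hs, app_assoc. auto.
  - destruct d.
    + rewrite Nat.pow_0_r, Nat.div_1_r in E. apply Pos2Nat.inj in E. subst. exists nil. auto.
    + exfalso. rewrite Nat.div_small in E. pose proof (Pos2Nat.is_pos b). lia.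
      simpl. pose proof (pow2_pos d). lia.
Qed.

Fixpoint pol_rev (l : list bool) : positive :=
  match l with nil => xH | c :: l' => if c then xI (pol_rev l') else xO (pol_rev l') end.
Lemma pol_rev_bits l : pos_bits (pol_rev l) = rev l.
Proof. induction l as [|[] l IH]; simpl; auto; rewrite IH; auto. Qed.

Lemma word_len m : length (word_of_nat m) < S m.
Proof.
  unfold word_of_nat. pose proof (pos_bits_bound (Pos.of_succ_nat m)).
  rewrite SuccNat2Pos.id_succ in H.
  pose proof (Nat.pow_gt_lin_r 2 (length (pos_bits (Pos.of_succ_nat m)))). lia.
Qed.

Lemma list_prefix_eq (w l : list bool) : length w <= length l ->
  (forall i, i < length w -> nth i w false = nth i l false) -> l = w ++ skipn (length w) l.
Proof.
  revert l; induction w as [|a w IH]; intros [|c l] Hl H; simpl in *; auto; try lia.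
  f_equal. symmetry; apply (H 0); lia. apply IH. lia. intros i Hi. apply (H (S i)); lia.
Qed.

Lemma bsum_le_term f n i : i < n -> f i <= bsum f n.
Proof. induction n; simpl; intros; [lia|]. destruct (Nat.eq_dec i n); [subst; lia|]. 
  specialize (IHn ltac:(lia)). lia. Qed.

Lemma nth_map_seq (x : nat -> bool) D i : i < D -> nth i (map x (seq 0 D)) false = x i.
Proof.
  intros H. rewrite nth_indep with (d' := x 0) by (rewrite length_map, length_seq; auto).
  rewrite map_nth, seq_nth; auto.
Qed.

Lemma hitb_zero b n t : hitb b n t = 0 <->
  forall i d, i <= n -> d < t -> ~ (b i <> 0 /\ shr t d = b i).
Proof.
  unfold hitb. rewrite bsum_zero_iff. split.
  - intros H i d Hi Hd [H1 H2]. specialize (H i ltac:(lia)). rewrite bsum_zero_iff in H.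
    specialize (H d Hd). simpl in H. destruct (Nat.eqb_spec (b i) 0); [contradiction|].
    rewrite H2, Nat.eqb_refl in H. discriminate.
  - intros H i Hi. rewrite bsum_zero_iff. intros d Hd.
    destruct (Nat.eqb_spec (b i) 0); auto. destruct (Nat.eqb_spec (shr t d) (b i)); auto.
    exfalso. apply (H i d); auto; lia.
Qed.

Lemma cover_iff b n : uncovb b n = 0 <-> forall x, exists i, i <= n /\ in_ball (b i) x.
Proof.
  unfold uncovb. set (D := Db b n).
  assert (HbD : forall i, i <= n -> b i <= D) by (intros i Hi; apply bsum_le_term; lia).
  rewrite bsum_zero_iff. split.
  - intros H x.
    set (bits := map x (seq 0 D)).
    set (tp := pol_rev (rev bits)).
    assert (Htp : pos_bits tp = bits) by (unfold tp; rewrite pol_rev_bits, rev_involutive; auto).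
    assert (Hlen : length bits = D) by (unfold bits; rewrite length_map, length_seq; auto).
    pose proof (pos_bits_bound tp) as Hb. rewrite Htp, Hlen in Hb. simpl in Hb.
    specialize (H (Pos.to_nat tp - 2 ^ D) ltac:(lia)).
    replace (2 ^ D + (Pos.to_nat tp - 2 ^ D)) with (Pos.to_nat tp) in H by lia.
    destruct (Nat.eqb_spec (hitb b n (Pos.to_nat tp)) 0) as [H0|H0]; [discriminate|].
    apply NNPP. intros Hno. apply H0. apply hitb_zero. intros i d Hi Hd [Hbi Hsh].
    apply Hno. exists i. split; auto.
    destruct (b i) as [|m] eqn:Ebi; [contradiction|]. simpl.
    rewrite shr_div in Hsh. rewrite <- (SuccNat2Pos.id_succ m) in Hsh.
    apply pre_div_l in Hsh as [s Hs]. rewrite Htp in Hs.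
    intros k Hk. unfold word_of_nat in *.
    assert (k < D).
    { assert (length bits = length (pos_bits (Pos.of_succ_nat m)) + length s)
        by (rewrite Hs, length_app; auto). lia. }
    transitivity (nth k bits false).
    + rewrite Hs, app_nth1; auto.
    + unfold bits. apply nth_map_seq; auto.
  - intros H j Hj.
    set (t := 2 ^ D + j).
    set (tp := Pos.of_nat t).
    assert (Ht : Pos.to_nat tp = t) by (apply Nat2Pos.id; unfold t; lia).
    pose proof (pos_bits_bound tp) as Hb. rewrite Ht in Hb.
    assert (HL : length (pos_bits tp) = D).
    { set (L := length (pos_bits tp)) in *. simpl in Hb.
      destruct (Nat.lt_trichotomy L D) as [HL|[HL|HL]]; auto; exfalso.
      - assert (2 ^ S L <= 2 ^ D) by (apply Nat.pow_le_mono_r; lia). simpl in *. unfold t in *. lia.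
      - assert (2 ^ S D <= 2 ^ L) by (apply Nat.pow_le_mono_r; lia). simpl in *. unfold t in *. lia. }
    destruct (H (fun k => nth k (pos_bits tp) false)) as [i [Hi Hin]].
    destruct (b i) as [|m] eqn:Ebi; [destruct Hin|]. simpl in Hin.
    pose proof (word_len m) as Hwl. pose proof (HbD i Hi) as HbiD. rewrite Ebi in HbiD.
    assert (Hpre := list_prefix_eq (word_of_nat m) (pos_bits tp) ltac:(lia) Hin).
    unfold word_of_nat in Hpre. apply pre_div_r in Hpre.
    rewrite Ht, SuccNat2Pos.id_succ in Hpre.
    destruct (Nat.eqb_spec (hitb b n t) 0) as [H0|H0]; auto.
    exfalso. apply hitb_zero with (i := i) (d := length (skipn (length (word_of_nat m)) (pos_bits tp))) in H0;
      auto.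
    + apply H0. split. rewrite Ebi; auto. rewrite shr_div. unfold word_of_nat. rewrite Hpre, Ebi. auto.
    + unfold word_of_nat in *. set (d := length (skipn (length (pos_bits (Pos.of_succ_nat m))) (pos_bits tp))) in *.
      assert (2 ^ d <= t).
      { destruct (Nat.le_gt_cases (2 ^ d) t); auto. rewrite Nat.div_small in Hpre; lia. }
      pose proof (Nat.pow_gt_lin_r 2 d). lia.
Qed.
Definition avoid (b : nat -> nat) (x : nat -> bool) := forall i, ~ in_ball (b i) x.
Definition covn (b : nat -> nat) n := forall x, exists i, i <= n /\ in_ball (b i) x.

Section Konig.
Variable b : nat -> nat.
Hypothesis Hnc : forall n, ~ covn b n.

Definition good (s : list bool) := forall n, exists x, is_prefix_of s x /\
  forall i, i <= n -> ~ in_ball (b i) x.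

Lemma good_nil : good nil.
Proof.
  intros n. specialize (Hnc n). unfold covn in Hnc.
  apply not_all_ex_not in Hnc as [x Hx]. exists x. split.
  - intros i Hi; simpl in Hi; lia.
  - intros i Hi Hin. apply Hx. exists i. auto.
Qed.

Lemma good_ext s : good s -> good (s ++ [false]) \/ good (s ++ [true]).
Proof.
  intros Hg. apply NNPP. intros Hn. apply not_or_and in Hn as [H0 H1].
  unfold good in H0, H1. apply not_all_ex_not in H0 as [n0 H0]. apply not_all_ex_not in H1 as [n1 H1].
  destruct (Hg (Nat.max n0 n1)) as [x [Hpx Hav]].
  assert (Hext : forall c, x (length s) = c -> is_prefix_of (s ++ [c]) x).
  { intros c Hc i Hi. rewrite length_app in Hi. simpl in Hi.
    destruct (Nat.eq_dec i (length s)).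
    - subst. rewrite app_nth2, Nat.sub_diag by lia. simpl. auto.
    - rewrite app_nth1 by lia. apply Hpx; lia. }
  destruct (x (length s)) eqn:Ex.
  - apply H1. exists x. split. apply Hext; auto. intros i Hi. apply Hav. lia.
  - apply H0. exists x. split. apply Hext; auto. intros i Hi. apply Hav. lia.
Qed.

Fixpoint path (k : nat) : list bool :=
  match k with
  | 0 => nil
  | S k' => if ClassicalEpsilon.excluded_middle_informative (good (path k' ++ [false]))
            then path k' ++ [false] else path k' ++ [true]
  end.

Lemma path_good k : good (path k).
Proof.
  induction k; simpl. apply good_nil.
  destruct (ClassicalEpsilon.excluded_middle_informative _); auto.
  destruct (good_ext _ IHk); auto. contradiction.
Qed.

Lemma path_S k : exists c, path (S k) = path k ++ [c].
Proof. simpl. destruct (ClassicalEpsilon.excluded_middle_informative _); eauto. Qed.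

Lemma path_len k : length (path k) = k.
Proof. induction k; auto. destruct (path_S k) as [c Hc]. rewrite Hc, length_app, IHk. simpl. lia. Qed.

Lemma path_nth j k r : j < k -> nth j (path (r + k)) false = nth j (path k) false.
Proof.
  intros H. induction r; auto. simpl plus. destruct (path_S (r + k)) as [c Hc]. rewrite Hc.
  rewrite app_nth1; auto. rewrite path_len. lia.
Qed.

Definition kx (i : nat) : bool := nth i (path (S i)) false.

Lemma kx_prefix k : is_prefix_of (path k) kx.
Proof.
  intros i Hi. rewrite path_len in Hi. unfold kx.
  replace k with ((k - S i) + S i) by lia. rewrite path_nth by lia. auto.
Qed.

Lemma konig : exists x, avoid b x.
Proof.
  exists kx. intros i Hin. destruct (b i) as [|m] eqn:Ebi; [destruct Hin|]. simpl in Hin.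
  set (L := length (word_of_nat m)).
  destruct (path_good L i) as [y [Hpy Hav]]. apply (Hav i); auto. rewrite Ebi. simpl.
  intros k Hk. rewrite Hin by auto.
  pose proof (kx_prefix L k). rewrite path_len in H. rewrite <- H by auto.
  apply Hpy. rewrite path_len. auto.
Qed.
End Konig.

Lemma covn_iff b n : uncovb b n = 0 <-> covn b n.
Proof. apply cover_iff. Qed.

Lemma tr_eq b : (exists x, avoid b x) -> forall i, tr b i = b i.
Proof.
  intros [x Hx] i. unfold tr. destruct (Nat.eqb_spec (uncovb b i) 0) as [E|E]; auto.
  apply covn_iff in E. destruct (E x) as [j [_ Hj]]. exfalso; apply (Hx j); auto.
Qed.

Lemma least_ex (P : nat -> Prop) i : P i -> exists i0, P i0 /\ forall j, j < i0 -> ~ P j.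
Proof.
  revert P. induction i; intros P H.
  - exists 0. split; auto. intros; lia.
  - destruct (classic (P 0)) as [H0|H0].
    + exists 0. split; auto. intros; lia.
    + destruct (IHi (fun k => P (S k)) H) as [i0 [Hi0 Hl]].
      exists (S i0). split; auto. intros [|j] Hj; auto. apply Hl. lia.
Qed.

Lemma tr_nonempty b : exists x, avoid (tr b) x.
Proof.
  destruct (classic (exists i, uncovb b i = 0)) as [[i Hi]|Hno].
  - destruct (least_ex (fun i => uncovb b i = 0) i Hi) as [i0 [Hi0 Hl]].
    assert (Hz : forall j, i0 <= j -> tr b j = 0).
    { intros j Hj. unfold tr. replace (uncovb b j) with 0; auto. symmetry. apply covn_iff.
      apply covn_iff in Hi0. intros x. destruct (Hi0 x) as [k [Hk Hin]]. exists k; split; auto; lia. }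
    destruct i0 as [|i1].
    + exists (fun _ => true). intros j. rewrite Hz by lia. simpl. auto.
    + assert (Hnc : ~ covn b i1) by (rewrite <- covn_iff; apply Hl; lia).
      apply not_all_ex_not in Hnc as [x Hx]. exists x. intros j Hin.
      destruct (Nat.le_gt_cases (S i1) j).
      * rewrite Hz in Hin by auto. destruct Hin.
      * unfold tr in Hin. destruct (Nat.eqb_spec (uncovb b j) 0) as [E|E].
        -- apply (Hl j); auto.
        -- apply Hx. exists j. split; auto; lia.
  - assert (Heq : forall i, tr b i = b i).
    { intros i. unfold tr. destruct (Nat.eqb_spec (uncovb b i) 0); auto. exfalso; eauto. }
    destruct (konig b) as [x Hx].
    + intros n Hc. apply Hno. exists n. apply covn_iff; auto.
    + exists x. intros i. rewrite Heq. apply Hx.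
Qed.
Lemma avoid_iff b x : ~ (exists n, in_ball (b n) x) <-> avoid b x.
Proof. unfold avoid. split; intros H. intros i Hi; apply H; eauto. intros [n Hn]; apply (H n); auto. Qed.

Lemma cnt_all p k : (forall i, p i <> 0) -> cnt_nz p k = k.
Proof. intros H. induction k; simpl; auto. destruct (Nat.eqb_spec (p k) 0); [exfalso; eapply H; eauto|]. lia. Qed.

Lemma minus1_S p : minus1 (fun n => S (p n)) p.
Proof. intros n. exists n. split; [lia|]. split. apply cnt_all; lia. simpl. lia. Qed.

Lemma minus1_balls p q x : minus1 p q ->
  ((exists n, in_ball (q n) x) <-> exists i, in_ball (p i - 1) x).
Proof.
  intros Hm. split.
  - intros [n Hn]. destruct (Hm n) as [k [_ [_ Hq]]]. exists k. rewrite <- Hq. auto.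
  - intros [i Hi]. destruct (Nat.eq_dec (p i) 0) as [E|E].
    + rewrite E in Hi. destruct Hi.
    + destruct (Hm (cnt_nz p i)) as [k [Hk [Hc Hq]]]. exists (cnt_nz p i). rewrite Hq.
      assert (k = i) by (apply cnt_inj with p; auto). subst. auto.
Qed.

Lemma comp_mach h : PR1 h -> computable_pfun (machine_fun h).
Proof. intros H. exists h. split. apply PR1_computable; auto. tauto. Qed.

Lemma red_a : sW_le C2N (pbar C2N).
Proof.
  exists (machine_fun hminus), (machine_fun hplus).
  split; [apply comp_mach, pr_hminus|]. split; [apply comp_mach, pr_hplus|].
  intros G _ HG p A Hp [a Ha].
  set (q := fun n => S (p n)).
  destruct (HG q (Some A)) as [s [Gqs [v [Hsv Hpb]]]].
  - simpl. exists p. split; auto. apply minus1_S.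
  - exists (Some a). simpl. intros _. exists a. auto.
  - simpl in Hpb. destruct Hpb as [y [-> Hy]]. exists a; auto.
    simpl in Hsv. destruct Hsv as [r [Hr Hry]].
    exists r. split.
    + exists q, s. split; [apply hplus_ok|]. split; auto. apply hminus_ok; auto.
    + exists y. split; auto.
Qed.

Lemma red_d : sW_le (ptot C2N) (pbar C2N).
Proof.
  exists (machine_fun hminus), (machine_fun (htrick 0 1)).
  split; [apply comp_mach, pr_hminus|]. split; [apply comp_mach, pr_htrick|].
  intros G _ HG p A Hp _.
  set (b := fun i => p i - 0).
  set (q := fun n => 1 + tr b n).
  set (B := fun x => ~ exists n, in_ball (tr b n) x).
  destruct (tr_nonempty b) as [x0 Hx0].
  destruct (HG q (Some B)) as [s [Gqs [v [Hsv Hpb]]]].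
  - simpl. exists (tr b). split; [apply (minus1_S (tr b))|]. intros x; unfold B; tauto.
  - exists (Some x0). simpl. intros _. exists x0. split; auto. unfold B, C2N. apply avoid_iff; auto.
  - simpl in Hpb. destruct Hpb as [y [-> Hy]]. exists x0. unfold B, C2N. apply avoid_iff; auto.
    simpl in Hsv. destruct Hsv as [r [Hr Hry]].
    exists r. split.
    + exists q, s. split; [apply (htrick_ok 0 1 p)|]. split; auto. apply hminus_ok; auto.
    + exists y. split; auto. intros [a Ha]. unfold C2N in *.
      simpl in Hp. apply Hp in Ha. apply Hp. apply avoid_iff in Ha. apply avoid_iff.
      assert (Hb : avoid b a) by (intros i; unfold b; rewrite Nat.sub_0_r; apply Ha).
      assert (Heq := tr_eq b (ex_intro _ a Hb)).
      unfold B in Hy. apply avoid_iff in Hy. intros i. specialize (Hy i).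
      rewrite Heq in Hy. unfold b in Hy. rewrite Nat.sub_0_r in Hy. auto.
Qed.

Lemma bc_core p u (G : Baire -> Baire -> Prop) :
  delta (completion closed_rep) p u ->
  (exists s y, G (fun n => tr (fun i => p i - 1) n) s /\ delta cantor_rep s y /\
     avoid (tr (fun i => p i - 1)) y) ->
  exists r, compose3 (machine_fun hplus) G (machine_fun (htrick 1 0)) p r /\
    exists y, delta (completion cantor_rep) r y /\ pbar C2N u y.
Proof.
  intros Hp [s [y [Gs [Hsy Hav]]]].
  exists (fun n => S (s n)). split.
  - exists (fun n => tr (fun i => p i - 1) n), s. split; [apply (htrick_ok 1 0 p)|].
    split; auto. apply hplus_ok.
  - exists (Some y). split.
    + simpl. exists s. split; auto. apply minus1_S.
    + destruct u as [A|]; simpl; auto. intros [a Ha]. exists y. split; auto.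
      simpl in Hp. destruct Hp as [q' [Hm Hq']]. unfold C2N.
      apply Hq' in Ha. apply Hq'. apply avoid_iff in Ha. apply avoid_iff.
      assert (Hb : avoid (fun i => p i - 1) a).
      { apply avoid_iff. rewrite <- (minus1_balls p q' a Hm). apply avoid_iff; auto. }
      assert (Heq := tr_eq _ (ex_intro _ a Hb)).
      assert (Hby : avoid (fun i => p i - 1) y) by (intros i; rewrite <- Heq; apply Hav).
      apply avoid_iff. rewrite (minus1_balls p q' y Hm). apply avoid_iff in Hby; auto.
Qed.

Lemma red_b : sW_le (pbar C2N) C2N.
Proof.
  exists (machine_fun hplus), (machine_fun (htrick 1 0)).
  split; [apply comp_mach, pr_hplus|]. split; [apply comp_mach, pr_htrick|].
  intros G _ HG p u Hp _. apply bc_core; auto.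
  set (b := fun i => p i - 1).
  destruct (tr_nonempty b) as [x0 Hx0].
  destruct (HG (fun n => tr b n) (fun x => ~ exists n, in_ball (tr b n) x)) as [s [Gqs [y [Hsy Hy]]]].
  - simpl. intros x; tauto.
  - exists x0. apply avoid_iff; auto.
  - exists s, y. split; auto. split; auto. apply avoid_iff; auto.
Qed.

Lemma red_c : sW_le (pbar C2N) (ptot C2N).
Proof.
  exists (machine_fun hplus), (machine_fun (htrick 1 0)).
  split; [apply comp_mach, pr_hplus|]. split; [apply comp_mach, pr_htrick|].
  intros G _ HG p u Hp _. apply bc_core; auto.
  set (b := fun i => p i - 1).
  destruct (tr_nonempty b) as [x0 Hx0].
  destruct (HG (fun n => tr b n) (fun x => ~ exists n, in_ball (tr b n) x)) as [s [Gqs [y [Hsy Hy]]]].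
  - simpl. intros x; tauto.
  - exists x0. intros _. apply avoid_iff; auto.
  - exists s, y. split; auto. split; auto. apply avoid_iff. apply Hy.
    exists x0. apply avoid_iff; auto.
Qed.

Theorem proposition6p1 :
  sW_equiv C2N (pbar C2N) /\ sW_equiv (pbar C2N) (ptot C2N).
Proof.
  split; split.
  - apply red_a.
  - apply red_b.
  - apply red_c.
  - apply red_d.
Qed.
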